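(* For every polynomial $F$ with real coefficients and every sufficiently large integer $N$, there exists a completely multiplicative function $f=f_{F,N}:\mathbb{N}\to\mathbb{C}$ with $|f(n)|\le1$ for all $n$ such that $$\left|\sum_{1\le n\le N}f(n)e(F(n))\right|\ge\frac1{10}\frac N{\log N}.$$
   Context: $e(x)=\exp(2\pi ix)$. A function is completely multiplicative if $f(1)=1$ and $f(mn)=f(m)f(n)$ for all $m,n$. *)

(* Defs.v *)
From Stdlib Require Import Reals List.
From Coquelicot Require Import Coquelicot.
Open Scope R_scope.

Definition e (x : R) : C := (cos (2 * PI * x), sin (2 * PI * x)).

(* A real polynomial given by its coefficient list [a0; a1; ...; ad]
   (lowest degree first), evaluated by Horner's scheme. *)
Definition poly_eval (c : list R) (x : R) : R :=
  fold_right (fun a acc => a + x * acc) 0 c.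

Definition completely_multiplicative (f : nat -> C) : Prop :=
  f 1%nat = 1%C /\
  forall m n : nat, (1 <= m)%nat -> (1 <= n)%nat -> f (m * n)%nat = (f m * f n)%C.

(* Main.v *)
Require Import Defs.
From Stdlib Require Import Reals List.
From Coquelicot Require Import Coquelicot.
Open Scope R_scope.
From Stdlib Require Import Lia Lra Psatz.
From mathcomp Require ssreflect ssrfun ssrbool eqtype ssrnat seq div prime binomial bigop.
From mathcomp Require zify.

Module NT.
Import ssreflect ssrfun ssrbool eqtype ssrnat seq div prime binomial bigop zify.
Local Open Scope nat_scope.

Definition pic (n : nat) : nat := count prime (iota 0 n.+1).

Lemma binom_ge m : 2 ^ m <= 'C(m.*2, m).
Proof.
elim: m => [|m IH] //.
have h1 := mul_bin_diag (m.*2.+2) m.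
have h2 : 'C(m.*2, m) <= 'C(m.*2.+1, m) by apply: leq_bin2l.
rewrite doubleS expnS.
have : (m.+1) * (2 * 2 ^ m) <= m.+1 * 'C(m.*2.+2, m.+1).
  rewrite -h1 /=. 
  have -> : m.*2.+2 = 2 * m.+1 by rewrite -mul2n; lia.
  rewrite -mulnA mulnCA leq_mul2l /=; apply/leq_mul => //; exact: leq_trans IH h2.
by rewrite leq_mul2l.
Qed.

Lemma logn_binom p m : prime p -> 0 < m -> p ^ logn p 'C(m.*2, m) <= m.*2.
Proof.
move=> pp m0.
set t := trunc_log p m.*2.
have p1 := prime_gt1 pp.
have ht : p ^ t <= m.*2 by apply: trunc_logP => //; lia.
have ht2 : m.*2 < p ^ t.+1 by apply: trunc_log_ltn.
suff : logn p 'C(m.*2, m) <= t.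
  move=> h; apply: leq_trans ht; exact: leq_pexp2l (ltnW p1) h.
have hb := bin_fact (leq_addl m m : m <= m + m).
rewrite addnn in hb.
have e1 : m.*2 - m = m by lia.
rewrite e1 in hb.
have hl : logn p 'C(m.*2, m) + (logn p m`! + logn p m`!) = logn p (m.*2)`!.
  by rewrite -hb !lognM ?fact_gt0 ?muln_gt0 ?fact_gt0 ?bin_gt0 //; lia.
rewrite !logn_fact // in hl.
have tle : t < m.*2.+1.
  have : t < p ^ t by apply: ltn_expl.
  lia.
have tm : t <= m.
  have h2t : 2 ^ t <= m.*2.
    apply: leq_trans ht; case: (t) => [|t'] //; rewrite leq_exp2r //; lia.
  have : m.*2 < 2 ^ m.+1 by rewrite expnS mul2n ltn_double; apply: ltn_expl.
  move=> hm; have : 2 ^ t < 2 ^ m.+1 by lia.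
  by rewrite ltn_exp2l.
have e2 : \sum_(1 <= k < m.*2.+1) m.*2 %/ p ^ k = \sum_(1 <= k < t.+1) m.*2 %/ p ^ k + \sum_(t.+1 <= k < m.*2.+1) m.*2 %/ p ^ k.
  by rewrite -big_cat_nat //.
have em : \sum_(1 <= k < m.+1) m %/ p ^ k = \sum_(1 <= k < t.+1) m %/ p ^ k + \sum_(t.+1 <= k < m.+1) m %/ p ^ k.
  by rewrite -big_cat_nat //.
rewrite e2 em in hl.
have hz : \sum_(t.+1 <= k < m.*2.+1) m.*2 %/ p ^ k = 0.
  apply: big1_seq => k /andP[_]; rewrite mem_index_iota => /andP[hk _].
  rewrite divn_small //; apply: leq_trans ht2 _; exact: leq_pexp2l (ltnW p1) hk.
rewrite hz addn0 in hl.
have h1 : \sum_(1 <= k < t.+1) m.*2 %/ p ^ k <= \sum_(1 <= k < t.+1) (2 * (m %/ p ^ k) + 1).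
  apply: leq_sum => k _.
  have hp : 0 < p ^ k by rewrite expn_gt0; lia.
  move: (p ^ k) hp => q hq.
  have := divn_eq m q; have := ltn_pmod m hq; have := divn_eq m.*2 q; have := ltn_pmod m.*2 hq.
  nia.
rewrite big_split /= -big_distrr /= in h1.
rewrite sum_nat_const_nat in h1.
lia.
Qed.

Lemma prod_logn n K : 0 < n -> n < K -> n = \prod_(0 <= p < K) p ^ logn p n.
Proof.
move=> n0 nK.
rewrite -{1}(partnT n0) /partn.
rewrite [RHS](big_cat_nat _ (n := n.+1)) //=.
rewrite [X in _ = _ * X]big1_seq ?muln1; last first.
  move=> p /andP[_]; rewrite mem_index_iota => /andP[hp _].
  case h: (logn p n) => //.
  have : 0 < logn p n by rewrite h.
  rewrite logn_gt0 mem_primes => /and3P[_ _ hd].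
  have := dvdn_leq n0 hd; lia.
by apply: eq_bigl => i; rewrite in_simpl.
Qed.

Lemma binom_pic m : 0 < m -> 'C(m.*2, m) <= (m.*2) ^ pic (m.*2).
Proof.
move=> m0.
set C := 'C(m.*2, m).
have C0 : 0 < C by rewrite bin_gt0 -addnn leq_addl.
set K := C.+1 + m.*2.
rewrite {1}(@prod_logn C K C0); last by rewrite /K; lia.
apply: (@leq_trans (\prod_(0 <= p < K) (if prime p && (p <= m.*2) then m.*2 else 1))).
  apply: leq_prod => p _.
  case pp: (prime p) => /=; last by rewrite /logn pp.
  case hp: (p <= m.*2); first exact: logn_binom.
  suff -> : logn p C = 0 by [].
  have hle : logn p C <= logn p (m.*2)`!.
    apply: dvdn_leq_log; first exact: fact_gt0.
    by rewrite -(bin_fact (_ : m <= m.*2)) ?dvdn_mulr // -addnn leq_addl.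
  rewrite logn_fact // big1_seq in hle; first by move: hle; case: (logn p C).
  move=> k /andP[_]; rewrite mem_index_iota => /andP[hk _].
  rewrite divn_small //; apply: leq_trans (_ : p <= p ^ k).
    by rewrite ltnNge hp.
  by rewrite -{1}(expn1 p) leq_pexp2l // prime_gt0.
rewrite -big_mkcond /= big_const_seq iter_muln_1 /index_iota subn0.
apply: leq_pexp2l; first by rewrite double_gt0.
rewrite /pic (_ : K = m.*2.+1 + C) ?iotaD ?count_cat; last by rewrite /K; lia.
rewrite (@eq_in_count _ _ (fun p => prime p) (iota 0 m.*2.+1)); last first.
  by move=> x; rewrite mem_iota => /andP[_ hx]; rewrite (_ : x <= m.*2) ?andbT //; lia.
rewrite (@eq_in_count _ _ pred0 (iota _ C)); last first.
  by move=> x; rewrite mem_iota => /andP[hx _] /=; rewrite (_ : x <= m.*2 = false) ?andbF //; lia.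
by rewrite count_pred0 addn0.
Qed.

Lemma expn_pow a b : expn a b = Nat.pow a b.
Proof. elim: b => [|b IH] //; by rewrite expnS IH. Qed.

Lemma pic_lower m : (0 < m)%coq_nat -> (Nat.pow 2 m <= Nat.pow (2 * m) (pic (2 * m)))%coq_nat.
Proof.
move=> /ltP m0; apply/leP; rewrite -!expn_pow mul2n.
apply: leq_trans (binom_ge m) (binom_pic m m0).
Qed.

Lemma pic_mono a b : (a <= b)%coq_nat -> (pic a <= pic b)%coq_nat.
Proof.
move=> /leP h; apply/leP; rewrite /pic (_ : b.+1 = a.+1 + (b - a)) ?iotaD ?count_cat ?leq_addr //; lia.
Qed.

Definition cntK (N s : nat) := count (fun n => prime n && (s < n)) (iota 0 N.+1).

Lemma cnt_bound N s : (s <= N)%coq_nat -> (pic N <= cntK N s + s + 1)%coq_nat.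
Proof.
move=> /leP h; apply/leP; rewrite /pic /cntK.
rewrite (_ : N.+1 = s.+1 + (N - s)) ?iotaD ?count_cat ?add0n; last by lia.
rewrite (@eq_in_count _ (fun n => prime n && (s < n)) pred0 (iota 0 s.+1)); last first.
  by move=> x; rewrite mem_iota => /andP[_ hx] /=; rewrite (_ : s < x = false) ?andbF //; lia.
have e : count (fun n => prime n && (s < n)) (iota s.+1 (N - s)) = count prime (iota s.+1 (N - s)).
  apply: eq_in_count => x; rewrite mem_iota => /andP[hx _] /=; rewrite (_ : s < x) ?andbT //; lia.
rewrite e.
have := count_size prime (iota 0 s.+1); rewrite size_iota count_pred0. lia.
Qed.

Definition goodb (N s n : nat) := all (fun p => (s < p) && (p <= N)) (primes n).

Lemma goodb1 N s : goodb N s 1 = true.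
Proof. by rewrite /goodb; have /eqP -> : primes 1 == [::] by rewrite primes_eq0. Qed.

Lemma goodbM N s m n : (0 < m)%coq_nat -> (0 < n)%coq_nat ->
  goodb N s (m * n)%coq_nat = goodb N s m && goodb N s n.
Proof.
move=> /ltP m0 /ltP n0; rewrite -[(m * n)%coq_nat]/(m * n) /goodb.
apply/idP/andP.
  move/allP=> h; split; apply/allP => p hp; apply: h; rewrite primesM // hp ?orbT //.
move=> [/allP h1 /allP h2]; apply/allP => p; rewrite primesM // => /orP[] hp; [exact: h1 | exact: h2].
Qed.

Lemma good_char N s n : (2 <= n)%coq_nat -> (n <= N)%coq_nat -> (N < (s + 1) * (s + 1))%coq_nat ->
  goodb N s n = prime n && (s < n).
Proof.
move=> /leP n2 /leP nN /ltP hs; rewrite /goodb.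
case pn: (prime n).
  by rewrite primes_prime //= nN !andbT.
apply/negbTE/negP => /allP h.
have hp : prime (pdiv n) by apply: pdiv_prime.
have hin : pdiv n \in primes n by rewrite mem_primes hp pdiv_dvd; lia.
have /andP[h1 _] := h _ hin.
have : pdiv n ^ 2 <= n.
  rewrite leqNgt; apply/negP => hl.
  by move: pn; rewrite ltn_pdiv2_prime //; lia.
rewrite expnS expn1 => hsq.
have : s.+1 * s.+1 <= pdiv n * pdiv n by apply: leq_mul.
nia.
Qed.

Lemma logn1' q : logn q 1 = 0.
Proof. exact: logn1. Qed.

Lemma lognM' q m n : (0 < m)%coq_nat -> (0 < n)%coq_nat -> logn q (m * n)%coq_nat = (logn q m + logn q n)%coq_nat.
Proof. by move=> /ltP m0 /ltP n0; rewrite -[(m * n)%coq_nat]/(m * n) plusE lognM. Qed.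

Lemma logn_prime' q p : prime p -> logn q p = if Nat.eqb q p then 1 else 0.
Proof.
by move=> pp; rewrite logn_prime.
Qed.

Lemma prime_ge2 p : prime p -> (2 <= p)%coq_nat.
Proof. by move=> /prime_gt1 /leP. Qed.

Lemma countS (b : nat -> bool) M : count b (iota 0 M.+2) = (count b (iota 0 M.+1) + (if b M.+1 then 1 else 0))%coq_nat.
Proof. rewrite (_ : M.+2 = M.+1 + 1) ?iotaD ?count_cat /= ?addn0 ?add0n; [case: (b M.+1) => /=; lia | lia]. Qed.

Lemma count0 (b : nat -> bool) : count b (iota 0 1) = if b 0 then 1 else 0.
Proof. by rewrite /= addn0. Qed.

Lemma prime0 : prime 0 = false. Proof. by []. Qed.
Lemma prime1 : prime 1 = false. Proof. by []. Qed.
End NT.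

Lemma e_add x y : e (x + y) = (e x * e y)%C.
Proof.
unfold e, Cmult; simpl.
replace (2 * PI * (x + y)) with (2 * PI * x + 2 * PI * y) by ring.
rewrite cos_plus, sin_plus. f_equal; ring.
Qed.

Lemma e_0 : e 0 = 1%C.
Proof. unfold e. rewrite Rmult_0_r, cos_0, sin_0. reflexivity. Qed.

Lemma Cmod_e x : Cmod (e x) = 1.
Proof.
unfold e, Cmod; cbn [fst snd].
assert (H := sin2_cos2 (2*PI*x)); unfold Rsqr in H.
match goal with |- sqrt ?a = 1 => replace a with 1 by (rewrite <- H; ring) end; apply sqrt_1.
Qed.

Definition Phi (F : list R) (N n : nat) : R :=
  sum_n (fun q => INR (prime.logn q n) * poly_eval F (INR q)) N.

Lemma Phi1 F N : Phi F N 1 = 0.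
Proof.
unfold Phi. rewrite (sum_n_ext _ (fun _ => 0)).
- induction N. + rewrite sum_O. reflexivity. + rewrite sum_Sn, IHN. unfold plus; simpl. ring.
- intro q. rewrite NT.logn1'. simpl. ring.
Qed.

Lemma PhiM F N m n : (0 < m)%nat -> (0 < n)%nat -> Phi F N (m * n) = Phi F N m + Phi F N n.
Proof.
intros hm hn. unfold Phi.
rewrite (sum_n_ext _ (fun q => plus (INR (prime.logn q m) * poly_eval F (INR q)) (INR (prime.logn q n) * poly_eval F (INR q)))).
- rewrite sum_n_plus. reflexivity.
- intro q. unfold plus; cbn. rewrite NT.lognM' by assumption. rewrite plus_INR. ring.
Qed.

Lemma sum_delta (a : nat -> R) p M :
  sum_n (fun q => INR (if Nat.eqb q p then 1%nat else 0%nat) * a q) M = if Nat.leb p M then a p else 0.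
Proof.
induction M.
- rewrite sum_O. destruct (Nat.eqb_spec 0 p); destruct (Nat.leb_spec p 0); subst; simpl; try lia; ring.
- rewrite sum_Sn, IHM.
  destruct (Nat.eqb_spec (S M) p); destruct (Nat.leb_spec p M); destruct (Nat.leb_spec p (S M)); subst; try lia;
  unfold plus; simpl; ring.
Qed.

Lemma Phi_prime F N p : prime.prime p = true -> (p <= N)%nat -> Phi F N p = poly_eval F (INR p).
Proof.
intros hp hN. unfold Phi.
rewrite (sum_n_ext _ (fun q => INR (if Nat.eqb q p then 1%nat else 0%nat) * poly_eval F (INR q))).
- rewrite sum_delta. destruct (Nat.leb_spec p N); [reflexivity | lia].
- intro q. rewrite NT.logn_prime' by assumption. reflexivity.
Qed.

Definition fF (F : list R) (N s : nat) (n : nat) : C :=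
  if NT.goodb N s n then e (- Phi F N n) else 0%C.

Lemma fF_cm F N s : completely_multiplicative (fF F N s).
Proof.
split.
- unfold fF. rewrite NT.goodb1, Phi1, Ropp_0. apply e_0.
- intros m n hm hn. unfold fF. rewrite NT.goodbM by lia.
  destruct (NT.goodb N s m); destruct (NT.goodb N s n); simpl.
  + rewrite PhiM by lia. rewrite Ropp_plus_distr. apply e_add.
  + rewrite Cmult_0_r. reflexivity.
  + rewrite Cmult_0_l. reflexivity.
  + rewrite Cmult_0_l. reflexivity.
Qed.

Lemma fF_bound F N s n : Cmod (fF F N s n) <= 1.
Proof.
unfold fF. destruct (NT.goodb N s n).
- rewrite Cmod_e. lra.
- rewrite Cmod_0. lra.
Qed.

Lemma real_part (N : nat) : 100000000 <= INR N ->
  INR (NT.cntK N (Nat.sqrt N)) - 1 >= (1/10) * (INR N / ln (INR N)).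
Proof.
intros HN.
set (s := Nat.sqrt N). set (m := Nat.div2 N). set (K := NT.cntK N s).
set (P2 := NT.pic (2 * m)). set (PN := NT.pic N).
assert (HN2 : (2 <= N)%nat) by (apply INR_le; simpl; lra).
assert (Hm : N = (2 * m + Nat.b2n (Nat.odd N))%nat) by apply Nat.div2_odd.
assert (Hb : (Nat.b2n (Nat.odd N) <= 1)%nat) by (destruct (Nat.odd N); simpl; lia).
assert (Hm0 : (0 < m)%nat) by lia.
assert (Hs := Nat.sqrt_spec N (Nat.le_0_l N)). fold s in Hs.
assert (HsN : (s <= N)%nat) by nia.
assert (H1 := NT.pic_lower m Hm0). rewrite <- ssrnat.multE in H1. fold P2 in H1.
assert (H2 : (P2 <= PN)%nat) by (apply NT.pic_mono; lia).
assert (H3 := NT.cnt_bound N s HsN). rewrite <- !ssrnat.plusE in H3. fold K PN in H3.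
set (Nr := INR N).
assert (HN' : 100000000 <= Nr) by exact HN.
assert (Hmr : Nr <= 2 * INR m + 1).
{ unfold Nr. rewrite Hm at 1. rewrite plus_INR, mult_INR. simpl (INR 2).
  assert (INR (Nat.b2n (Nat.odd N)) <= 1) by (apply (le_INR _ 1) in Hb; simpl in Hb; lra). lra. }
assert (Hsr : INR s * INR s <= Nr).
{ unfold Nr. rewrite <- mult_INR. apply le_INR. lia. }
assert (HK : INR PN <= INR K + INR s + 1).
{ apply le_INR in H3. rewrite !plus_INR in H3. simpl (INR 1) in H3. lra. }
assert (HP : INR P2 <= INR PN) by (apply le_INR; lia).
assert (Hm2 : 2 * INR m <= Nr) by (unfold Nr; replace 2 with (INR 2) by (simpl; lra); rewrite <- mult_INR; apply le_INR; lia).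
assert (Hmpos : 1 <= INR m) by (apply (le_INR 1); lia).
set (L := ln Nr).
assert (HL0 : 0 < L) by (unfold L; rewrite <- ln_1; apply ln_increasing; lra).
assert (Hcheb : INR m * ln 2 <= INR P2 * L).
{ apply le_INR in H1. rewrite !pow_INR, mult_INR in H1. replace (INR 2) with 2 in H1 by (simpl; ring).
  apply ln_le in H1; [| apply pow_lt; lra].
  rewrite !ln_pow in H1 by lra.
  assert (ln (2 * INR m) <= L) by (apply ln_le; lra).
  assert (0 <= INR P2) by apply pos_INR.
  assert (INR P2 * ln (2 * INR m) <= INR P2 * L) by (apply Rmult_le_compat_l; lra).
  lra. }
assert (Hln2 := ln_lt_2).
set (z := sqrt (sqrt Nr)).
assert (Hsq1 : sqrt Nr * sqrt Nr = Nr) by (apply sqrt_sqrt; lra).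
assert (Hsq0 : 0 <= sqrt Nr) by apply sqrt_pos.
assert (Hz2 : z * z = sqrt Nr) by (apply sqrt_sqrt; lra).
assert (Hz0 : 0 <= z) by apply sqrt_pos.
assert (Hz4 : Nr = z ^ 4) by (rewrite <- Hsq1, <- Hz2; ring).
assert (Hz100 : 100 <= z).
{ destruct (Rle_lt_dec 100 z) as [h|h]; [exact h|].
  exfalso. assert (z*z < 10000) by nra. assert (z*z*(z*z) < 100000000) by nra.
  assert (Nr = z*z*(z*z)) by (transitivity (z^4); [exact Hz4 | ring]). lra. }
assert (HLz : L = 4 * ln z).
{ unfold L. transitivity (ln (z ^ 4)); [f_equal; exact Hz4|]. rewrite ln_pow by lra. simpl (INR 4). ring. }
assert (Hlnz : ln z < z).
{ rewrite <- (ln_exp z) at 2. apply ln_increasing; [lra|]. assert (H := exp_ineq1 z). lra. }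
assert (Hlnz0 : 0 < ln z) by lra.
assert (Hs0 : 0 <= INR s) by apply pos_INR.
assert (Hsz : INR s <= z * z).
{ destruct (Rle_lt_dec (INR s) (z * z)) as [h|h]; [exact h|]. exfalso.
  assert (z * z * (z * z) < INR s * INR s) by nra. assert (Nr = z*z*(z*z)) by (transitivity (z^4); [exact Hz4 | ring]). nra. }
assert (Hmain : (INR K - 1) * L >= Nr / 10).
{ assert (E1 : (INR K - 1) * L >= INR P2 * L - (INR s + 2) * L) by nra.
  assert (E2 : (INR s + 2) * L <= (z * z + 2) * (4 * z)) by (rewrite HLz; nra).
  assert (E3 : INR P2 * L >= INR m / 2) by nra.
  assert (E4 : z ^ 4 >= 100 * z ^ 3) by (simpl; nra).
  assert (E5 : Nr / 10 <= (Nr - 1) / 4 - (z * z + 2) * (4 * z)).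
  { assert (Nr = z*z*(z*z)) by (transitivity (z^4); [exact Hz4 | ring]). simpl in E4. nra. }
  lra. }
apply Rle_ge. unfold Rdiv. rewrite Rmult_1_l.
apply (Rmult_le_reg_r L); [lra|].
replace (/ 10 * (Nr * / L) * L) with (Nr / 10) by (field; lra). lra.
Qed.

Lemma sum_count (b : nat -> bool) M :
  sum_n (fun n => RtoC (if b n then 1 else 0)) M = RtoC (INR (seq.count b (seq.iota 0 (S M)))).
Proof.
induction M.
- rewrite sum_O, NT.count0. destruct (b 0%nat); reflexivity.
- rewrite sum_Sn, IHM, NT.countS, plus_INR. unfold plus; cbn -[INR]. rewrite <- RtoC_plus.
  destruct (b (S M)); reflexivity.
Qed.

Theorem mainTheorem17 :
  forall F : list R,
  exists N0 : nat, forall N : nat, (N0 <= N)%nat ->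
  exists f : nat -> C,
    completely_multiplicative f /\
    (forall n : nat, (1 <= n)%nat -> Cmod (f n) <= 1) /\
    Cmod (sum_n_m (fun n : nat => (f n * e (poly_eval F (INR n)))%C) 1 N)
      >= (1 / 10) * (INR N / ln (INR N)).
Proof.
intros F. exists (Nat.pow 10 8). intros N HN0.
assert (HN : 100000000 <= INR N).
{ apply le_INR in HN0. rewrite pow_INR in HN0. replace (INR 10) with 10 in HN0 by (simpl; ring). lra. }
assert (HN2 : (2 <= N)%nat) by (apply INR_le; simpl; lra).
set (s := Nat.sqrt N).
exists (fF F N s). split; [apply fF_cm|]. split; [intros; apply fF_bound|].
assert (Hs := Nat.sqrt_spec N (Nat.le_0_l N)). fold s in Hs.
set (T := fun n : nat => (fF F N s n * e (poly_eval F (INR n)))%C).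
set (b := fun n => (prime.prime n && ssrnat.leq (S s) n)%bool).
set (G := fun n => RtoC (if b n then 1 else 0)).
assert (HTG : sum_n_m T 2 N = sum_n_m G 2 N).
{ apply sum_n_m_ext_loc. intros k Hk. unfold T, G, fF.
  rewrite NT.good_char by (try lia; replace (s+1)%nat with (S s) by lia; lia).
  fold (b k). destruct (b k) eqn:Eb.
  - unfold b in Eb. apply andb_prop in Eb. destruct Eb as [Ep _].
    rewrite Phi_prime by (auto; lia). rewrite <- e_add, Rplus_opp_l, e_0. reflexivity.
  - rewrite Cmult_0_l. reflexivity. }
assert (HG : sum_n G N = (RtoC 0 + (RtoC 0 + sum_n_m G 2 N))%C).
{ unfold sum_n. rewrite sum_Sn_m by lia. rewrite sum_Sn_m by lia. unfold plus; cbn.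
  unfold G, b. rewrite NT.prime0, NT.prime1. reflexivity. }
assert (HC := sum_count b N). change (sum_n G N = RtoC (INR (seq.count b (seq.iota 0 (S N))))) in HC. rewrite HC in HG.
assert (HK : sum_n_m G 2 N = RtoC (INR (NT.cntK N s))).
{ change (sum_n_m G 2 N = RtoC (INR (seq.count b (seq.iota 0 (S N))))). rewrite HG. now rewrite !Cplus_0_l. }
rewrite sum_Sn_m by lia. unfold plus; cbn -[sum_n_m]. fold (T 1%nat). rewrite HTG, HK.
assert (HT1 : Cmod (T 1%nat) <= 1).
{ unfold T. rewrite Cmod_mult, Cmod_e, Rmult_1_r. apply fF_bound. }
assert (Htri : Cmod (RtoC (INR (NT.cntK N s))) <= Cmod (T 1%nat + RtoC (INR (NT.cntK N s))) + Cmod (- T 1%nat)).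
{ replace (RtoC (INR (NT.cntK N s))) with ((T 1%nat + RtoC (INR (NT.cntK N s))) + - T 1%nat)%C at 1 by ring.
  apply Cmod_triangle. }
rewrite Cmod_opp, Cmod_R, Rabs_right in Htri by (apply Rle_ge, pos_INR).
assert (H := real_part N HN). fold s in H. lra.
Qed.
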